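(* Let $\mathbb A$ be a graph of groups and $\mathcal B$ a folded $\mathbb A$-graph with associated graph of groups $\mathbb B$. Let $p=a_0,e_1,a_1,\dots,e_k,a_k$ ($k\ge0$) be a reduced $\mathbb A$-path. Then $\bar p=\overline{\mu(q)}$ for some reduced $\mathbb B$-path $q$ if and only if there exist a reduced $\mathbb B$-path $q=b_0,f_1,b_1,\dots,b_{k-1},f_k,b_k$ and elements $c_i\in A_{e_i}$ ($i=1,\dots,k$) such that $[f_i]=e_i$ and $a_0=b_0(f_1)_\alpha\alpha_{e_1}(c_1)$, $a_i=\omega_{e_i}(c_i)^{-1}(f_i)_\omega b_i(f_{i+1})_\alpha\alpha_{e_{i+1}}(c_{i+1})$ for $i=1,\dots,k-1$, and $a_k=\omega_{e_k}(c_k)^{-1}(f_k)_\omega b_k$.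
   Context: Graphs are in Serre's sense. A graph of groups $\mathbb A$ has vertex groups $A_v$, edge groups $A_e=A_{e^{-1}}$, monomorphisms $\alpha_e:A_e\to A_{o(e)}$, $\omega_e:A_e\to A_{t(e)}$ with $\alpha_{e^{-1}}=\omega_e$. An $\mathbb A$-path is $a_0,e_1,a_1,\dots,e_k,a_k$ with $e_i$ an edge path and $a_i$ in the appropriate vertex groups; it is reduced if it has no subsequence $e,\omega_e(c),e^{-1}$ with $c\in A_e$. $\sim$ is the equivalence relation generated (modulo concatenation) by $a,e,\omega_e(c),e^{-1},\bar a\sim a\alpha_e(c)\bar a$, and $\bar p$ is the class of $p$. An $\mathbb A$-graph $\mathcal B$: graph $B$, graph morphism $[\cdot]:B\to A$, subgroups $B_u\le A_{[u]}$, elements $f_\alpha\in A_{[o(f)]}$, $f_\omega\in A_{[t(f)]}$ with $(f^{-1})_\alpha=f_\omega^{-1}$. Its graph of groups $\mathbb B$: graph $B$, vertex groups $B_u$, edge groups $B_f=\alpha_{[f]}^{-1}(f_\alpha^{-1}B_{o(f)}f_\alpha)\cap\omega_{[f]}^{-1}(f_\omega B_{t(f)}f_\omega^{-1})$, $\alpha_f(g)=f_\alpha\alpha_{[f]}(g)f_\alpha^{-1}$, $\omega_f(g)=f_\omega^{-1}\omega_{[f]}(g)f_\omega$. A $\mathbb B$-path $b_0,f_1,\dots,f_s,b_s$ is reduced if it has no subsequence $f,\omega_f(c),f^{-1}$ with $c\in B_f$, and $\mu(q)=(b_0(f_1)_\alpha),[f_1],((f_1)_\omega b_1(f_2)_\alpha),\dots,[f_s],((f_s)_\omega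 b_s)$. $\mathcal B$ is folded if neither holds: (1) distinct edges $f_1,f_2$ with $o(f_1)=o(f_2)=z$, $[f_1]=[f_2]=e$, and $(f_2)_\alpha=a'(f_1)_\alpha\alpha_e(c)$ for some $c\in A_e$, $a'\in B_z$; (2) an edge $f$ with $[f]=e$ and $\alpha_e^{-1}(f_\alpha^{-1}B_{o(f)}f_\alpha)\neq\omega_e^{-1}(f_\omega B_{t(f)}f_\omega^{-1})$. *)

(* Defs.v *)
From Stdlib Require Import Relations.

(* A group is given by a carrier predicate [gin] on an ambient
   type X together with operations; all group axioms are required on
   members.  (Every group arises this way, e.g. with X its own carrier
   and [gin] everywhere true.)  Using a common ambient type for all
   vertex groups (resp. all edge groups) of a graph of groups avoids
   dependent-type casts; membership "a in A_v" is [gin (Av v) a].      *)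
Record grp_on (X : Type) := GrpOn {
  gin : X -> Prop;
  gmul : X -> X -> X;
  ginv : X -> X;
  gone : X;
  gone_in : gin gone;
  gmul_in : forall x y, gin x -> gin y -> gin (gmul x y);
  ginv_in : forall x, gin x -> gin (ginv x);
  gmulA : forall x y z, gin x -> gin y -> gin z ->
            gmul x (gmul y z) = gmul (gmul x y) z;
  gmul1g : forall x, gin x -> gmul gone x = x;
  gmulVg : forall x, gin x -> gmul (ginv x) x = gone }.

Arguments gin {X} g x.
Arguments gmul {X} g x y.
Arguments ginv {X} g x.
Arguments gone {X} g.

Definition is_subgroup {X : Type} (G : grp_on X) (H : X -> Prop) : Prop :=
  (forall x, H x -> gin G x) /\ H (gone G) /\
  (forall x y, H x -> H y -> H (gmul G x y)) /\
  (forall x, H x -> H (ginv G x)).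

Definition is_mono {X Y : Type} (H : grp_on Y) (G : grp_on X) (f : Y -> X) : Prop :=
  (forall y, gin H y -> gin G (f y)) /\
  (forall y z, gin H y -> gin H z -> f (gmul H y z) = gmul G (f y) (f z)) /\
  (forall y z, gin H y -> gin H z -> f y = f z -> y = z).

Record serre_graph := SerreGraph {
  sV : Type;
  sE : Type;
  so : sE -> sV;
  sinv : sE -> sE;
  sinvK : forall e, sinv (sinv e) = e;
  sinv_neq : forall e, sinv e <> e }.

Arguments so {s} e.
Arguments sinv {s} e.

Definition st {G : serre_graph} (e : sE G) : sV G := so (sinv e).

(* Graphs of groups: vertex groups A_v, edge groups A_e = A_{e^{-1}},
   monomorphisms alpha_e : A_e -> A_{o(e)}; omega_e := alpha_{e^{-1}}
   (so that alpha_{e^{-1}} = omega_e holds by definition, and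
   omega_e : A_e = A_{e^{-1}} -> A_{t(e)} is a monomorphism). *)
Record graph_of_groups := GraphOfGroups {
  gG :> serre_graph;
  VX : Type;   (* ambient type of the vertex groups *)
  EX : Type;   (* ambient type of the edge groups *)
  Av : sV gG -> grp_on VX;
  Ae : sE gG -> grp_on EX;
  Ae_inv : forall e, Ae (sinv e) = Ae e;
  alpha : sE gG -> EX -> VX;
  alpha_mono : forall e, is_mono (Ae e) (Av (so e)) (alpha e) }.

Arguments Av {g} v.
Arguments Ae {g} e.
Arguments alpha {g} e c.

Definition omega {A : graph_of_groups} (e : sE A) : EX A -> VX A := alpha (sinv e).

(* Generic paths  x_0, e_1, x_1, ..., e_k, x_k  (the base vertex is
   recorded in the final [PNil], needed when k = 0). *)
Inductive gpath (V E X : Type) :=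
| PNil (v : V) (x : X)
| PCons (x : X) (e : E) (p : gpath V E X).

Arguments PNil {V E X} v x.
Arguments PCons {V E X} x e p.

Definition pstart {V E X : Type} (o : E -> V) (p : gpath V E X) : V :=
  match p with PNil v _ => v | PCons _ e _ => o e end.

Fixpoint pvalid {V E X : Type} (o t : E -> V) (memb : V -> X -> Prop)
    (p : gpath V E X) : Prop :=
  match p with
  | PNil v x => memb v x
  | PCons x e p' => memb (o e) x /\ pstart o p' = t e /\ pvalid o t memb p'
  end.

Definition phead_map {V E X : Type} (h : X -> X) (p : gpath V E X) : gpath V E X :=
  match p with
  | PNil v x => PNil v (h x)
  | PCons x e p' => PCons (h x) e p'
  end.

Definition apath (A : graph_of_groups) := gpath (sV A) (sE A) (VX A).

Definition avalid (A : graph_of_groups) (p : apath A) : Prop :=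
  pvalid (@so A) (@st A) (fun v x => gin (Av v) x) p.

Fixpoint areduced (A : graph_of_groups) (p : apath A) : Prop :=
  match p with
  | PNil _ _ => True
  | PCons _ e p' =>
      areduced A p' /\
      match p' with
      | PNil _ _ => True
      | PCons w e' _ =>
          ~ (e' = sinv e /\ exists c, gin (Ae e) c /\ w = omega e c)
      end
  end.

(* elementary move (in any context):
   ..., a, e, omega_e(c), e^{-1}, abar, ...  -->  ..., a alpha_e(c) abar, ... *)
Inductive aelem (A : graph_of_groups) : apath A -> apath A -> Prop :=
| AE_base : forall (a : VX A) (e : sE A) (c : EX A) (p : apath A),
    gin (Ae e) c ->
    aelem A (PCons a e (PCons (omega e c) (sinv e) p))
            (phead_map (fun ab => gmul (Av (so e)) a (gmul (Av (so e)) (alpha e c) ab)) p)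
| AE_cons : forall (a : VX A) (e : sE A) (p q : apath A),
    aelem A p q -> aelem A (PCons a e p) (PCons a e q).

Definition aequiv (A : graph_of_groups) (p q : apath A) : Prop :=
  clos_refl_sym_trans (apath A)
    (fun x y => avalid A x /\ avalid A y /\ aelem A x y) p q.

Record agraph (A : graph_of_groups) := AGraph {
  bG :> serre_graph;
  vmap : sV bG -> sV A;
  emap : sE bG -> sE A;
  emap_o : forall f, so (emap f) = vmap (so f);
  emap_inv : forall f, emap (sinv f) = sinv (emap f);
  Bv : sV bG -> VX A -> Prop;
  Bv_sub : forall u, is_subgroup (Av (vmap u)) (Bv u);
  fa : sE bG -> VX A;
  fw : sE bG -> VX A;
  fa_in : forall f, gin (Av (vmap (so f))) (fa f);
  fw_in : forall f, gin (Av (vmap (st f))) (fw f);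
  fa_inv : forall f, fa (sinv f) = ginv (Av (vmap (st f))) (fw f) }.

Arguments vmap {A} _ _.
Arguments emap {A} _ _.
Arguments Bv {A} _ _ _.
Arguments fa {A} _ _.
Arguments fw {A} _ _.

Section AGraphDefs.
Variables (A : graph_of_groups) (B : agraph A).

Definition preim_alpha (f : sE B) (g : EX A) : Prop :=
  let Go := Av (vmap B (so f)) in
  gin (Ae (emap B f)) g /\
  exists b, Bv B (so f) b /\
    alpha (emap B f) g = gmul Go (ginv Go (fa B f)) (gmul Go b (fa B f)).

Definition preim_omega (f : sE B) (g : EX A) : Prop :=
  let Gt := Av (vmap B (st f)) in
  gin (Ae (emap B f)) g /\
  exists b, Bv B (st f) b /\
    omega (emap B f) g = gmul Gt (fw B f) (gmul Gt b (ginv Gt (fw B f))).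

Definition Bedge (f : sE B) (g : EX A) : Prop := preim_alpha f g /\ preim_omega f g.

Definition omegaB (f : sE B) (g : EX A) : VX A :=
  let Gt := Av (vmap B (st f)) in
  gmul Gt (ginv Gt (fw B f)) (gmul Gt (omega (emap B f) g) (fw B f)).

Definition bpath := gpath (sV B) (sE B) (VX A).

Definition bvalid (q : bpath) : Prop := pvalid (@so B) (@st B) (Bv B) q.

Fixpoint breduced (q : bpath) : Prop :=
  match q with
  | PNil _ _ => True
  | PCons _ f q' =>
      breduced q' /\
      match q' with
      | PNil _ _ => True
      | PCons w f' _ =>
          ~ (f' = sinv f /\ exists c, Bedge f c /\ w = omegaB f c)
      end
  end.

Definition lmul (G : grp_on (VX A)) (pre : option (VX A)) (x : VX A) : VX A :=
  match pre with None => x | Some l => gmul G l x end.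

(* mu(q) = (b_0 f1_alpha), [f_1], (f1_omega b_1 f2_alpha), ..., [f_s], (fs_omega b_s) *)
Fixpoint mu_from (pre : option (VX A)) (q : bpath) : apath A :=
  match q with
  | PNil u b => PNil (vmap B u) (lmul (Av (vmap B u)) pre b)
  | PCons b f q' =>
      PCons (gmul (Av (vmap B (so f))) (lmul (Av (vmap B (so f))) pre b) (fa B f))
            (emap B f) (mu_from (Some (fw B f)) q')
  end.

Definition mu (q : bpath) : apath A := mu_from None q.

Definition folded : Prop :=
  (~ exists (f1 f2 : sE B) (a' : VX A) (c : EX A),
       f1 <> f2 /\ so f1 = so f2 /\ emap B f1 = emap B f2 /\
       gin (Ae (emap B f1)) c /\ Bv B (so f1) a' /\
       fa B f2 = gmul (Av (vmap B (so f1)))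
                   (gmul (Av (vmap B (so f1))) a' (fa B f1))
                   (alpha (emap B f1) c)) /\
  (~ exists f : sE B, ~ (forall g, preim_alpha f g <-> preim_omega f g)).

(* The accumulator [pre] is None at the start and
   Some (omega_{ei}(c_i)^{-1} fi_omega) afterwards. *)
Fixpoint mrel (pre : option (VX A)) (p : apath A) (q : bpath) : Prop :=
  match p, q with
  | PNil v a, PNil u b => vmap B u = v /\ a = lmul (Av v) pre b
  | PCons a e p', PCons b f q' =>
      let G := Av (so e) in
      let Gt := Av (st e) in
      emap B f = e /\
      exists c, gin (Ae e) c /\
        a = lmul G pre (gmul G (gmul G b (fa B f)) (alpha e c)) /\
        mrel (Some (gmul Gt (ginv Gt (omega e c)) (fw B f))) p' q'
  | _, _ => False
  end.

End AGraphDefs.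

Arguments bpath {A} B.
Arguments bvalid {A} B q.
Arguments breduced {A} B q.
Arguments mu {A} B q.
Arguments folded {A} B.
Arguments mrel {A} B pre p q.

(* Main.v *)
Require Import Defs.
From Stdlib Require Import Relations Classical Lia.

Module P1.

Create HintDb grp.
#[export] Hint Resolve gmul_in ginv_in gone_in : grp.
Ltac gin_auto := solve [auto 40 with grp].

Section Grp.
Variables (X : Type) (G : grp_on X).

Lemma gmulV x : gin G x -> gmul G x (ginv G x) = gone G.
Proof.
  intros Hx.
  assert (Hy : gin G (ginv G x)) by gin_auto.
  rewrite <- (gmul1g _ G (gmul G x (ginv G x))) by gin_auto.
  rewrite <- (gmulVg _ G (ginv G x)) at 1 by gin_auto.
  rewrite <- gmulA by gin_auto.
  rewrite (gmulA _ G (ginv G x) x) by gin_auto.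
  rewrite gmulVg by gin_auto. rewrite gmul1g by gin_auto.
  apply gmulVg; gin_auto.
Qed.

Lemma gmul1 x : gin G x -> gmul G x (gone G) = x.
Proof.
  intros Hx. rewrite <- (gmulVg _ G x) by gin_auto.
  rewrite gmulA by gin_auto. rewrite gmulV by gin_auto. apply gmul1g; auto.
Qed.

Lemma gmulKV x y : gin G x -> gin G y -> gmul G (ginv G x) (gmul G x y) = y.
Proof. intros. rewrite gmulA by gin_auto. rewrite gmulVg by gin_auto. apply gmul1g; auto. Qed.

Lemma gmulVK x y : gin G x -> gin G y -> gmul G x (gmul G (ginv G x) y) = y.
Proof. intros. rewrite gmulA by gin_auto. rewrite gmulV by gin_auto. apply gmul1g; auto. Qed.

Lemma gcancel_l x y z : gin G x -> gin G y -> gin G z -> gmul G x y = gmul G x z -> y = z.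
Proof. intros Hx Hy Hz H. rewrite <- (gmulKV x y), <- (gmulKV x z) by auto. rewrite H; auto. Qed.

Lemma gcancel_r x y z : gin G x -> gin G y -> gin G z -> gmul G y x = gmul G z x -> y = z.
Proof.
  intros Hx Hy Hz H. rewrite <- (gmul1 y), <- (gmul1 z) by auto.
  rewrite <- (gmulV x) by auto. rewrite !gmulA by gin_auto. rewrite H; auto.
Qed.

Lemma ginv_uniq x y : gin G x -> gin G y -> gmul G x y = gone G -> y = ginv G x.
Proof.
  intros Hx Hy H. apply (gcancel_l x); try gin_auto. rewrite H, gmulV; auto.
Qed.

Lemma ginvK x : gin G x -> ginv G (ginv G x) = x.
Proof. intros. symmetry. apply ginv_uniq; try gin_auto. apply gmulVg; auto. Qed.

Lemma ginv1 : ginv G (gone G) = gone G.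
Proof. symmetry. apply ginv_uniq; try gin_auto. apply gmul1g; gin_auto. Qed.

Lemma ginvM x y : gin G x -> gin G y -> ginv G (gmul G x y) = gmul G (ginv G y) (ginv G x).
Proof.
  intros. symmetry. apply ginv_uniq; try gin_auto.
  rewrite <- gmulA by gin_auto. rewrite (gmulA _ G y) by gin_auto.
  rewrite gmulV by gin_auto. rewrite gmul1g by gin_auto. apply gmulV; auto.
Qed.

Lemma gsquare x : gin G x -> gmul G x x = x -> x = gone G.
Proof. intros Hx H. apply (gcancel_l x); try gin_auto. rewrite gmul1, H; auto. Qed.

End Grp.

#[export] Hint Rewrite gmulKV gmulVK : gs.

Ltac gsimp := try unfold st; repeat (first
  [ rewrite <- gmulA by gin_auto
  | rewrite gmulKV by gin_auto
  | rewrite gmulVK by gin_auto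
  | rewrite gmulV by gin_auto
  | rewrite gmulVg by gin_auto
  | rewrite gmul1g by gin_auto
  | rewrite gmul1 by gin_auto
  | rewrite ginvM by gin_auto
  | rewrite ginvK by gin_auto
  | rewrite ginv1 ]).

Section Mono.
Variables (X Y : Type) (H : grp_on Y) (G : grp_on X) (f : Y -> X).
Hypothesis Hf : is_mono H G f.

Lemma mono_in y : gin H y -> gin G (f y).
Proof. apply Hf. Qed.
Lemma mono_mul y z : gin H y -> gin H z -> f (gmul H y z) = gmul G (f y) (f z).
Proof. apply Hf. Qed.
Lemma mono_inj y z : gin H y -> gin H z -> f y = f z -> y = z.
Proof. apply Hf. Qed.
Lemma mono_one : f (gone H) = gone G.
Proof.
  apply gsquare. apply mono_in; gin_auto.
  rewrite <- mono_mul by gin_auto. rewrite gmul1g by gin_auto. reflexivity.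
Qed.
Lemma mono_inv y : gin H y -> f (ginv H y) = ginv G (f y).
Proof.
  intros. apply ginv_uniq; try (apply mono_in; gin_auto).
  rewrite <- mono_mul by gin_auto. rewrite gmulV by auto. apply mono_one.
Qed.
End Mono.

End P1.
Import P1.

Module P2.

Section GA.
Variable A : graph_of_groups.

Lemma alpha_in (e : sE A) c : gin (Ae e) c -> gin (Av (so e)) (alpha e c).
Proof. apply (mono_in _ _ _ _ _ (alpha_mono A e)). Qed.
Lemma Ae_sinv_in (e : sE A) c : gin (Ae e) c -> gin (Ae (sinv e)) c.
Proof. rewrite Ae_inv; auto. Qed.
Lemma Ae_sinv_in' (e : sE A) c : gin (Ae (sinv e)) c -> gin (Ae e) c.
Proof. rewrite Ae_inv; auto. Qed.
Lemma omega_mono (e : sE A) : is_mono (Ae e) (Av (st e)) (omega e).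
Proof. pose proof (alpha_mono A (sinv e)) as H. rewrite Ae_inv in H. exact H. Qed.
Lemma omega_in (e : sE A) c : gin (Ae e) c -> gin (Av (st e)) (omega e c).
Proof. apply (mono_in _ _ _ _ _ (omega_mono e)). Qed.
Lemma omega_in' (e : sE A) c : gin (Ae e) c -> gin (Av (so (sinv e))) (omega e c).
Proof. apply omega_in. Qed.
Lemma alpha_sinv_in (e : sE A) c : gin (Ae e) c -> gin (Av (so (sinv e))) (alpha (sinv e) c).
Proof. apply omega_in. Qed.
Lemma alpha_mul (e : sE A) c d : gin (Ae e) c -> gin (Ae e) d ->
  alpha e (gmul (Ae e) c d) = gmul (Av (so e)) (alpha e c) (alpha e d).
Proof. apply (mono_mul _ _ _ _ _ (alpha_mono A e)). Qed.
Lemma alpha_inv (e : sE A) c : gin (Ae e) c -> alpha e (ginv (Ae e) c) = ginv (Av (so e)) (alpha e c).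
Proof. apply (mono_inv _ _ _ _ _ (alpha_mono A e)). Qed.
Lemma alpha_one (e : sE A) : alpha e (gone (Ae e)) = gone (Av (so e)).
Proof. apply (mono_one _ _ _ _ _ (alpha_mono A e)). Qed.
Lemma omega_mul (e : sE A) c d : gin (Ae e) c -> gin (Ae e) d ->
  omega e (gmul (Ae e) c d) = gmul (Av (st e)) (omega e c) (omega e d).
Proof. apply (mono_mul _ _ _ _ _ (omega_mono e)). Qed.
Lemma omega_inv (e : sE A) c : gin (Ae e) c -> omega e (ginv (Ae e) c) = ginv (Av (st e)) (omega e c).
Proof. apply (mono_inv _ _ _ _ _ (omega_mono e)). Qed.
Lemma omega_one (e : sE A) : omega e (gone (Ae e)) = gone (Av (st e)).
Proof. apply (mono_one _ _ _ _ _ (omega_mono e)). Qed.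
Lemma omega_inj (e : sE A) c d : gin (Ae e) c -> gin (Ae e) d -> omega e c = omega e d -> c = d.
Proof. apply (mono_inj _ _ _ _ _ (omega_mono e)). Qed.
Lemma omega_sinv (e : sE A) : omega (sinv e) = alpha e.
Proof. unfold omega. rewrite sinvK. reflexivity. Qed.
Lemma st_sinv (e : sE A) : st (sinv e) = so e.
Proof. unfold st. rewrite sinvK. reflexivity. Qed.

End GA.

#[export] Hint Resolve alpha_in omega_in omega_in' alpha_sinv_in Ae_sinv_in : grp.

Fixpoint plen {V E X : Type} (p : gpath V E X) : nat :=
  match p with PNil _ _ => 0 | PCons _ _ p' => S (plen p') end.
Definition phead {V E X : Type} (p : gpath V E X) : X :=
  match p with PNil _ x => x | PCons x _ _ => x end.

Lemma phead_map_comp {V E X : Type} (h1 h2 : X -> X) (p : gpath V E X) :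
  phead_map h1 (phead_map h2 p) = phead_map (fun x => h1 (h2 x)) p.
Proof. destruct p; reflexivity. Qed.
Lemma phead_map_ext {V E X : Type} (h1 h2 : X -> X) (p : gpath V E X) :
  h1 (phead p) = h2 (phead p) -> phead_map h1 p = phead_map h2 p.
Proof. destruct p; simpl; intros H; rewrite H; reflexivity. Qed.
Lemma pstart_phead_map {V E X : Type} (o : E -> V) (h : X -> X) (p : gpath V E X) :
  pstart o (phead_map h p) = pstart o p.
Proof. destruct p; reflexivity. Qed.
Lemma plen_phead_map {V E X : Type} (h : X -> X) (p : gpath V E X) :
  plen (phead_map h p) = plen p.
Proof. destruct p; reflexivity. Qed.
Lemma phead_phead_map {V E X : Type} (h : X -> X) (p : gpath V E X) :
  phead (phead_map h p) = h (phead p).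
Proof. destruct p; reflexivity. Qed.

End P2.
Import P2.

Module P3.

Section Paths.
Variable A : graph_of_groups.
Local Notation ps p := (pstart (@so (gG A)) p).

Lemma avalid_head (p : apath A) : avalid A p -> gin (Av (ps p)) (phead p).
Proof. destruct p; simpl; unfold avalid; simpl; tauto. Qed.

Lemma avalid_phead_map (p : apath A) h :
  avalid A p -> gin (Av (ps p)) (h (phead p)) -> avalid A (phead_map h p).
Proof. destruct p; unfold avalid; simpl; tauto. Qed.

Lemma step_props (p s : apath A) : aelem A p s -> avalid A p ->
  avalid A s /\ ps s = ps p /\ plen p = S (S (plen s)).
Proof.
  induction 1 as [a e c r Hc | a e r s H IH]; unfold avalid; simpl.
  - intros [Ha [_ [Hw [Hr Hv]]]].
    assert (Hrs : ps r = so e) by (rewrite Hr; apply st_sinv).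
    pose proof (avalid_head r Hv) as Hh. rewrite Hrs in Hh.
    split; [|split].
    + apply avalid_phead_map; auto. rewrite Hrs. gin_auto.
    + rewrite pstart_phead_map; auto.
    + rewrite plen_phead_map; auto.
  - intros [Ha [Hr Hv]]. destruct (IH Hv) as [H1 [H2 H3]].
    split; [|split]; auto. split; auto. split; auto. rewrite H2; auto.
Qed.

Fixpoint cr (x : VX A) (p p' : apath A) : Prop :=
  match p, p' with
  | PNil v a, PNil v' a' => v = v' /\ a' = gmul (Av v) x a
  | PCons a e r, PCons a' e' r' => e = e' /\ exists c, gin (Ae e) c /\
        a' = gmul (Av (so e)) x (gmul (Av (so e)) a (alpha e c)) /\
        cr (ginv (Av (st e)) (omega e c)) r r'
  | _, _ => False
  end.

Lemma cr_eq x y p p' : cr x p p' -> x = y -> cr y p p'.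
Proof. intros H ->; exact H. Qed.

Lemma cr_valid (p : apath A) : forall x p', avalid A p -> gin (Av (ps p)) x -> cr x p p' ->
  avalid A p' /\ ps p' = ps p /\ plen p' = plen p.
Proof.
  unfold avalid; induction p as [v a | a e r IH]; intros x p' Hv Hx Hc;
    destruct p' as [v' a' | a' e' r']; simpl in *; try contradiction.
  - destruct Hc as [<- ->]. split; auto. gin_auto.
  - destruct Hc as [<- [c [Hc [-> Hcr]]]]. destruct Hv as [Ha [Hr Hv]].
    assert (Hy : gin (Av (ps r)) (ginv (Av (st e)) (omega e c))) by (rewrite Hr; gin_auto).
    destruct (IH _ _ Hv Hy Hcr) as [H1 [H2 H3]].
    + split; [|split]; auto. split; [gin_auto|]. split; auto. rewrite H2; auto.
Qed.

Lemma cr_refl (p : apath A) : forall z, avalid A p -> z = gone (Av (ps p)) -> cr z p p.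
Proof.
  unfold avalid; induction p as [v a | a e r IH]; intros z Hv Hz; simpl in *; subst z.
  - split; auto. rewrite gmul1g; auto.
  - destruct Hv as [Ha [Hr Hv]]. split; auto. exists (gone (Ae e)). split; [gin_auto|].
    split.
    + rewrite alpha_one. gsimp. reflexivity.
    + apply IH; auto. rewrite Hr, omega_one, ginv1. reflexivity.
Qed.

Lemma cr_head (p : apath A) y : avalid A p -> gin (Av (ps p)) y ->
  cr y p (phead_map (gmul (Av (ps p)) y) p).
Proof.
  unfold avalid; destruct p as [v a | a e r]; intros Hv Hy; simpl in *.
  - split; auto.
  - destruct Hv as [Ha [Hr Hv]]. split; auto. exists (gone (Ae e)). split; [gin_auto|].
    split.
    + rewrite alpha_one. gsimp. reflexivity.
    + apply cr_refl; auto. rewrite Hr, omega_one, ginv1. reflexivity.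
Qed.

Lemma cr_sym (p : apath A) : forall x p', avalid A p -> gin (Av (ps p)) x -> cr x p p' ->
  cr (ginv (Av (ps p)) x) p' p.
Proof.
  unfold avalid; induction p as [v a | a e r IH]; intros x p' Hv Hx Hc;
    destruct p' as [v' a' | a' e' r']; simpl in *; try contradiction.
  - destruct Hc as [<- ->]. split; auto. gsimp. reflexivity.
  - destruct Hc as [<- [c [Hc [-> Hcr]]]]. destruct Hv as [Ha [Hr Hv]].
    split; auto. exists (ginv (Ae e) c). split; [gin_auto|]. split.
    + rewrite alpha_inv by auto. gsimp. reflexivity.
    + eapply cr_eq.
      { apply (IH (ginv (Av (st e)) (omega e c)) r' Hv); [rewrite Hr; gin_auto | exact Hcr]. }
      rewrite Hr, omega_inv by auto. gsimp. reflexivity.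
Qed.

Lemma cr_trans (p : apath A) : forall x p' x' p'', avalid A p -> gin (Av (ps p)) x ->
  gin (Av (ps p)) x' -> cr x p p' -> cr x' p' p'' -> cr (gmul (Av (ps p)) x' x) p p''.
Proof.
  unfold avalid; induction p as [v a | a e r IH]; intros x p' x' p'' Hv Hx Hx' Hc Hc';
    destruct p' as [v' a' | a' e' r']; simpl in *; try contradiction;
    destruct p'' as [v'' a'' | a'' e'' r'']; simpl in *; try contradiction.
  - destruct Hc as [<- ->]. destruct Hc' as [<- ->]. split; auto. gsimp. reflexivity.
  - destruct Hc as [<- [c [Hc [-> Hcr]]]]. destruct Hc' as [<- [c' [Hc' [-> Hcr']]]].
    destruct Hv as [Ha [Hr Hv]].
    split; auto. exists (gmul (Ae e) c c'). split; [gin_auto|]. split.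
    + rewrite alpha_mul by auto. gsimp. reflexivity.
    + eapply cr_eq.
      { apply (IH (ginv (Av (st e)) (omega e c)) r' (ginv (Av (st e)) (omega e c')) r'' Hv); [rewrite Hr; gin_auto | rewrite Hr; gin_auto | exact Hcr | exact Hcr']. }
      rewrite Hr, omega_mul by auto. rewrite ginvM by gin_auto. reflexivity.
Qed.

End Paths.

End P3.
Import P3.

Module P4.

Section Paths2.
Variable A : graph_of_groups.
Local Notation ps p := (pstart (@so (gG A)) p).

Lemma cr_reduced (p : apath A) : forall x p', avalid A p -> gin (Av (ps p)) x ->
  cr A x p p' -> areduced A p -> areduced A p'.
Proof.
  unfold avalid; induction p as [v a | a e r IH]; intros x p' Hv Hx Hc Hred;
    destruct p' as [v' a' | a' e' r']; simpl in *; try contradiction; auto.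
  destruct Hc as [<- [c [Hc [-> Hcr]]]]. destruct Hv as [Ha [Hr Hv]].
  destruct Hred as [Hred Hm]. split.
  - apply (IH (ginv (Av (st e)) (omega e c)) r' Hv); auto. rewrite Hr; gin_auto.
  - destruct r as [v0 w | w e2 r0]; destruct r' as [v0' w' | w' e2' r0'];
      simpl in Hcr; try contradiction; auto.
    destruct Hcr as [<- [c2 [Hc2 [Hw' _]]]].
    intros [He2 [d [Hd Hdw]]]. subst e2. apply Hm. split; auto.
    destruct Hv as [Hw _].
    apply Ae_sinv_in' in Hc2.
    change (alpha (sinv e) c2) with (omega e c2) in Hw'.
    exists (gmul (Ae e) c (gmul (Ae e) d (ginv (Ae e) c2))). split; [gin_auto|].
    rewrite !omega_mul by gin_auto. rewrite omega_inv by auto.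
    rewrite <- Hdw, Hw'. simpl in Hw. gsimp. reflexivity.
Qed.

Lemma cr_phead (r : apath A) : forall y r'' x u u' v, ps r = v -> avalid A r ->
  gin (Av v) y -> gin (Av v) x -> gin (Av v) u -> gin (Av v) u' -> cr A y r r'' ->
  gmul (Av v) u' y = gmul (Av v) x u ->
  cr A x (phead_map (gmul (Av v) u) r) (phead_map (gmul (Av v) u') r'').
Proof.
  unfold avalid; intros y r'' x u u' v Hv Hval Hy Hx Hu Hu' Hc Heq.
  destruct r as [v0 a | a e r0]; destruct r'' as [v0' a' | a' e' r0'];
    simpl in *; try contradiction; subst v.
  - destruct Hc as [<- ->]. split; auto.
    rewrite (gmulA _ _ u') by gin_auto. rewrite Heq. gsimp. reflexivity.
  - destruct Hc as [<- [c [Hc [-> Hcr]]]]. destruct Hval as [Ha _].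
    split; auto. exists c. split; auto. split; auto.
    rewrite (gmulA _ _ u') by gin_auto. rewrite Heq. gsimp. reflexivity.
Qed.

Lemma cr_step (p s : apath A) : aelem A p s -> forall x p', avalid A p -> gin (Av (ps p)) x ->
  cr A x p p' -> exists s', aelem A p' s' /\ cr A x s s'.
Proof.
  unfold avalid; induction 1 as [a e d r Hd | a e r s H IH]; intros x p' Hv Hx Hc.
  - destruct p' as [v' a' | a' e' r'0]; simpl in Hc; try contradiction.
    destruct Hc as [<- [c1 [Hc1 [Ha' Hcr]]]].
    destruct r'0 as [v'' m | m e3 r'']; simpl in Hcr; try contradiction.
    destruct Hcr as [<- [c2 [Hc2 [Hm Hcr]]]].
    simpl in Hv. destruct Hv as [Ha [_ [Hw [Hr Hv]]]].
    assert (Ha'in : gin (Av (so e)) a') by (rewrite Ha'; gin_auto).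
    apply Ae_sinv_in' in Hc2.
    change (alpha (sinv e) c2) with (omega e c2) in Hm.
    unfold st at 1 in Hcr. rewrite omega_sinv in Hcr. rewrite (sinvK _ e) in Hcr.
    assert (Hrs : ps r = so e) by (rewrite Hr; apply st_sinv).
    set (d' := gmul (Ae e) (ginv (Ae e) c1) (gmul (Ae e) d c2)).
    assert (Hd' : gin (Ae e) d') by (unfold d'; gin_auto).
    assert (Hm' : m = omega e d').
    { unfold d'. rewrite !omega_mul by gin_auto. rewrite omega_inv by auto.
      rewrite Hm. reflexivity. }
    exists (phead_map (fun ab => gmul (Av (so e)) a' (gmul (Av (so e)) (alpha e d') ab)) r'').
    split.
    + rewrite Hm'. apply AE_base; auto.
    + pose proof (avalid_head A r Hv) as Hh. rewrite Hrs in Hh.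
      pose proof (cr_valid A r (ginv (Av (so e)) (alpha e c2)) r'' Hv ltac:(rewrite Hrs; gin_auto) Hcr) as [Hv'' [Hps'' _]].
      pose proof (avalid_head A r'' Hv'') as Hh''. rewrite Hps'', Hrs in Hh''.
      rewrite (phead_map_ext _ (gmul (Av (so e)) (gmul (Av (so e)) a (alpha e d))) r)
        by (gsimp; reflexivity).
      rewrite (phead_map_ext _ (gmul (Av (so e)) (gmul (Av (so e)) a' (alpha e d'))) r'')
        by (gsimp; reflexivity).
      apply (cr_phead r (ginv (Av (so e)) (alpha e c2))); auto; try (subst a'; gin_auto).
      subst a'. unfold d'. rewrite !alpha_mul by gin_auto. rewrite alpha_inv by auto.
      gsimp. reflexivity.
  - destruct p' as [v' a' | a' e' r']; simpl in Hc; try contradiction.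
    destruct Hc as [<- [c [Hc [Ha' Hcr]]]].
    simpl in Hv. destruct Hv as [Ha [Hr Hv]].
    destruct (IH (ginv (Av (st e)) (omega e c)) r' Hv ltac:(rewrite Hr; gin_auto) Hcr)
      as [s' [Hs' Hcs']].
    exists (PCons a' e s'). split.
    + apply AE_cons; auto.
    + simpl. split; auto. exists c. auto.
Qed.

End Paths2.

End P4.
Import P4.

Module P5.

Section Conf.
Variable A : graph_of_groups.
Local Notation ps p := (pstart (@so (gG A)) p).

Definition step (p s : apath A) := avalid A p /\ aelem A p s.
Definition star := clos_refl_trans_1n (apath A) step.
Definition eqv (p q : apath A) := cr A (gone (Av (ps p))) p q.

Lemma star_props p m : star p m -> avalid A p ->
  avalid A m /\ ps m = ps p /\ plen m <= plen p.
Proof.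
  induction 1 as [|x y z [Hx Hxy] Hyz IH]; intros Hv; auto.
  destruct (step_props A _ _ Hxy Hv) as [H1 [H2 H3]].
  destruct (IH H1) as [H4 [H5 H6]]. split; [|split]; auto. congruence. lia.
Qed.

Lemma eqv_props p q : avalid A p -> eqv p q -> avalid A q /\ ps q = ps p /\ plen q = plen p.
Proof. intros Hv H. apply (cr_valid A p (gone (Av (ps p))) q Hv); auto. gin_auto. Qed.

Lemma eqv_refl p : avalid A p -> eqv p p.
Proof. intros. apply cr_refl; auto. Qed.

Lemma eqv_sym p q : avalid A p -> eqv p q -> eqv q p.
Proof.
  intros Hv H. destruct (eqv_props p q Hv H) as [_ [Hps _]].
  unfold eqv. eapply cr_eq. apply (cr_sym A p (gone (Av (ps p))) q Hv); auto. gin_auto.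
  rewrite Hps, ginv1. reflexivity.
Qed.

Lemma eqv_trans p q r : avalid A p -> eqv p q -> eqv q r -> eqv p r.
Proof.
  intros Hv H1 H2. destruct (eqv_props p q Hv H1) as [_ [Hps _]].
  unfold eqv in *. rewrite Hps in H2. eapply cr_eq.
  apply (cr_trans A p (gone (Av (ps p))) q (gone (Av (ps p))) r Hv); eauto; gin_auto.
  gsimp. reflexivity.
Qed.

Lemma eqv_cons a e t1 t2 : avalid A t1 -> ps t1 = st e -> gin (Av (so e)) a ->
  eqv t1 t2 -> eqv (PCons a e t1) (PCons a e t2).
Proof.
  intros Hv Hps Ha H. unfold eqv in *. simpl. split; auto.
  exists (gone (Ae e)). split; [gin_auto|]. split.
  - rewrite alpha_one. gsimp. reflexivity.
  - eapply cr_eq; [exact H|]. rewrite Hps, omega_one, ginv1. reflexivity.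
Qed.

Lemma star_cons a e r r' : star r r' -> avalid A r -> gin (Av (so e)) a -> ps r = st e ->
  star (PCons a e r) (PCons a e r').
Proof.
  induction 1 as [|x y z [Hx Hxy] Hyz IH]; intros Hv Ha Hps.
  - apply rt1n_refl.
  - destruct (step_props A _ _ Hxy Hv) as [H1 [H2 H3]].
    apply (@Relation_Operators.rt1n_trans _ _ _ (PCons a e y)).
    + split; [|apply AE_cons; auto]. unfold avalid; simpl; auto.
    + apply IH; auto. congruence.
Qed.

Lemma star_step p s m : step p s -> star s m -> star p m.
Proof. intros. eapply Relation_Operators.rt1n_trans; eauto. Qed.

Lemma star_trans p s m : star p s -> star s m -> star p m.
Proof.
  induction 1 as [|x y z Hxy Hyz IH]; auto. intros H. eapply Relation_Operators.rt1n_trans; [exact Hxy|]. apply IH; auto.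
Qed.

Lemma phead_aelem r r2 v u : ps r = v -> avalid A r -> gin (Av v) u -> aelem A r r2 ->
  aelem A (phead_map (gmul (Av v) u) r) (phead_map (gmul (Av v) u) r2).
Proof.
  intros Hv Hval Hu H. destruct H as [b e2 d2 r4 Hd2 | b e2 r5 r6 H].
  - simpl in Hv. subst v. unfold avalid in Hval; simpl in Hval.
    destruct Hval as [Hb [_ [_ [Hr4 Hv4]]]].
    pose proof (avalid_head A r4 Hv4) as Hh. rewrite Hr4, st_sinv in Hh.
    rewrite phead_map_comp. simpl.
    replace (phead_map (fun x => gmul (Av (so e2)) u (gmul (Av (so e2)) b (gmul (Av (so e2)) (alpha e2 d2) x))) r4)
      with (phead_map (fun ab => gmul (Av (so e2)) (gmul (Av (so e2)) u b) (gmul (Av (so e2)) (alpha e2 d2) ab)) r4).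
    + apply AE_base; auto.
    + apply phead_map_ext. gsimp. reflexivity.
  - simpl. apply AE_cons; auto.
Qed.

End Conf.

End P5.
Import P5.

Module P6.

Section Conf2.
Variable A : graph_of_groups.
Local Notation ps p := (pstart (@so (gG A)) p).
Local Notation star := (star A).
Local Notation step := (step A).
Local Notation eqv := (eqv A).

Lemma lc_base a e d r s2 : avalid A (PCons a e (PCons (omega e d) (sinv e) r)) -> gin (Ae e) d ->
  aelem A (PCons a e (PCons (omega e d) (sinv e) r)) s2 ->
  exists t1 t2, star (phead_map (fun ab => gmul (Av (so e)) a (gmul (Av (so e)) (alpha e d) ab)) r) t1
    /\ star s2 t2 /\ eqv t1 t2.
Proof.
  intros Hv Hd Hs2.
  assert (Hs1 : aelem A (PCons a e (PCons (omega e d) (sinv e) r))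
     (phead_map (fun ab => gmul (Av (so e)) a (gmul (Av (so e)) (alpha e d) ab)) r))
    by (apply AE_base; auto).
  destruct (step_props A _ _ Hs1 Hv) as [Hv1 [Hps1 _]].
  pose proof Hv as Hv0.
  unfold avalid in Hv; simpl in Hv. destruct Hv as [Ha [_ [Hw [Hr Hv]]]].
  assert (Hrs : ps r = so e) by (rewrite Hr; apply st_sinv).
  remember (PCons a e (PCons (omega e d) (sinv e) r)) as p eqn:Hp.
  destruct Hs2 as [a0 e0 c0 p0 Hc0 | a0 e0 p0 q0 H0].
  - injection Hp; intros; subst.
    match goal with H : omega _ _ = omega _ _ |- _ => apply omega_inj in H; auto end.
    subst. eexists; eexists. split; [apply rt1n_refl|]. split; [apply rt1n_refl|]. apply eqv_refl; auto.
  - injection Hp; intros; subst.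
    remember (PCons (omega e d) (sinv e) r) as p1 eqn:Hp1.
    destruct H0 as [a1 e1 c1 p2 Hc1 | a1 e1 p2 q2 H2].
    + injection Hp1; intros; subst. clear Hp1.
      eexists; eexists. split; [apply rt1n_refl|]. split; [apply rt1n_refl|].
      unfold avalid in Hv; simpl in Hv. destruct Hv as [Hw1 [Hp2 Hv2]].
      apply Ae_sinv_in' in Hc1.
      unfold eqv. simpl. rewrite omega_sinv. rewrite omega_sinv in Hw1.
      rewrite (sinvK _ e) in *. split; auto.
      exists (ginv (Ae e) (gmul (Ae e) d c1)). split; [gin_auto|]. split.
      * rewrite alpha_inv, alpha_mul by gin_auto. gsimp. reflexivity.
      * pose proof (avalid_head A p2 Hv2) as Hh. rewrite Hp2 in Hh.
        eapply cr_eq.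
        { replace (phead_map _ p2) with
            (phead_map (gmul (Av (ps p2)) (gmul (Av (st e)) (omega e d) (omega e c1))) p2).
          - apply cr_head; auto. rewrite Hp2. gin_auto.
          - apply phead_map_ext. rewrite Hp2. gsimp. reflexivity. }
        rewrite omega_inv, omega_mul by gin_auto. gsimp. reflexivity.
    + injection Hp1; intros; subst. clear Hp1.
      pose proof (avalid_head A r Hv) as Hh. rewrite Hrs in Hh.
      destruct (step_props A _ _ H2 Hv) as [Hv2 [Hps2 _]].
      pose proof (avalid_head A q2 Hv2) as Hh2. rewrite Hps2, Hrs in Hh2.
      set (u := gmul (Av (so e)) a (alpha e d)).
      exists (phead_map (gmul (Av (so e)) u) q2), (phead_map (gmul (Av (so e)) u) q2).
      split; [|split].
      * eapply star_step; [|apply rt1n_refl]. split; auto.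
        rewrite (phead_map_ext _ (gmul (Av (so e)) u)) by (unfold u; gsimp; reflexivity).
        apply phead_aelem; auto. unfold u; gin_auto.
      * eapply star_step; [|apply rt1n_refl]. split.
        { unfold avalid; simpl. split; auto. split; auto. split; auto. split; auto.
          rewrite Hps2; auto. }
        rewrite (phead_map_ext (gmul (Av (so e)) u)
           (fun ab => gmul (Av (so e)) a (gmul (Av (so e)) (alpha e d) ab)))
          by (unfold u; gsimp; reflexivity).
        apply AE_base; auto.
      * apply eqv_refl. apply avalid_phead_map; auto.
        rewrite Hps2, Hrs. unfold u; gin_auto.
Qed.

Lemma lc p s1 : aelem A p s1 -> forall s2, avalid A p -> aelem A p s2 ->
  exists t1 t2, star s1 t1 /\ star s2 t2 /\ eqv t1 t2.
Proof.
  induction 1 as [a e d r Hd | a e r s H IH]; intros s2 Hv Hs2.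
  - apply lc_base; auto.
  - remember (PCons a e r) as p eqn:Hp.
    destruct Hs2 as [a0 e0 c0 p0 Hc0 | a0 e0 p0 q0 H0].
    + injection Hp as Ha0 He0 Hr0; subst a0 e0 r.
      destruct (lc_base a e c0 p0 (PCons a e s) Hv Hc0 (AE_cons A _ _ _ _ H))
        as [t1 [t2 [H1 [H2 H3]]]].
      exists t2, t1. split; auto. split; auto.
      apply eqv_sym; auto.
      destruct (step_props A _ _ (AE_base A a e c0 p0 Hc0) Hv) as [Hv' _].
      apply (star_props A _ _ H1 Hv').
    + injection Hp as Ha0 He0 Hr0; subst a0 e0 p0.
      unfold avalid in Hv; simpl in Hv. destruct Hv as [Ha [Hr Hv]].
      destruct (IH q0 Hv H0) as [t1 [t2 [H1 [H2 H3]]]].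
      destruct (step_props A _ _ H Hv) as [Hvs [Hpss _]].
      destruct (star_props A _ _ H1 Hvs) as [Hvt1 [Hpst1 _]].
      exists (PCons a e t1), (PCons a e t2). split; [|split].
      * apply star_cons; auto. congruence.
      * destruct (step_props A _ _ H0 Hv) as [Hvq [Hpsq _]].
        apply star_cons; auto. congruence.
      * apply eqv_cons; auto. congruence.
Qed.

End Conf2.

End P6.
Import P6.

Module P7.

Section NF.
Variable A : graph_of_groups.
Local Notation ps p := (pstart (@so (gG A)) p).
Local Notation star := (star A).
Local Notation step := (step A).
Local Notation eqv := (eqv A).

Lemma red_nostep p s : aelem A p s -> areduced A p -> False.
Proof.
  induction 1 as [a e c r Hc | a e r s H IH]; simpl.
  - intros [_ Hn]. apply Hn. split; auto. exists c; auto.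
  - intros [H1 _]. auto.
Qed.

Lemma red_or_step (p : apath A) : areduced A p \/ exists s, aelem A p s.
Proof.
  induction p as [v a | a e r IH].
  - left. simpl. auto.
  - destruct IH as [Hr | [s Hs]].
    + destruct r as [v w | w e' r0].
      * left. simpl. auto.
      * destruct (classic (e' = sinv e /\ exists c, gin (Ae e) c /\ w = omega e c))
          as [[He [c [Hc Hw]]] | Hn].
        -- right. subst. eexists. apply AE_base; auto.
        -- left. simpl. split; auto.
    + right. exists (PCons a e s). apply AE_cons; auto.
Qed.

Lemma nf_exists n : forall p, plen p < n -> avalid A p -> exists m, star p m /\ areduced A m.
Proof.
  induction n as [|n IH]; intros p Hl Hv; [lia|].
  destruct (red_or_step p) as [Hr | [s Hs]].
  - exists p. split; auto. apply rt1n_refl.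
  - destruct (step_props A _ _ Hs Hv) as [Hv' [_ Hl']].
    destruct (IH s ltac:(lia) Hv') as [m [H1 H2]].
    exists m. split; auto. eapply star_step; eauto. split; auto.
Qed.

Lemma nf_exists' p : avalid A p -> exists m, star p m /\ areduced A m.
Proof. apply (nf_exists (S (plen p))). lia. Qed.

Lemma eqv_reduced p p' : avalid A p -> eqv p p' -> areduced A p -> areduced A p'.
Proof. intros Hv H Hr. apply (cr_reduced A p (gone (Av (ps p))) p' Hv); auto. gin_auto. Qed.

Lemma newman n : forall p p' m m', plen p < n -> avalid A p -> eqv p p' ->
  star p m -> areduced A m -> star p' m' -> areduced A m' -> eqv m m'.
Proof.
  induction n as [|n IH]; intros p p' m m' Hl Hv He Hm Hmr Hm' Hmr'; [lia|].
  destruct (eqv_props A p p' Hv He) as [Hv' [Hps' Hl']].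
  destruct Hm as [|s m [_ Hs] Hsm].
  - assert (Hr' : areduced A p') by (apply (eqv_reduced p); auto).
    destruct Hm' as [|s' m' [_ Hs'] _].
    + auto.
    + exfalso. eapply red_nostep; eauto.
  - destruct (cr_step A p s Hs (gone (Av (ps p))) p' Hv ltac:(gin_auto) He) as [s'' [Hs'' Hcs]].
    destruct (step_props A _ _ Hs Hv) as [Hvs [Hpss Hls]].
    destruct (step_props A _ _ Hs'' Hv') as [Hvs'' [Hpss'' Hls'']].
    assert (Hes : eqv s s'') by (unfold eqv, P5.eqv; rewrite Hpss; exact Hcs).
    destruct Hm' as [|s' m' [_ Hs'] Hs'm'].
    + exfalso. eapply red_nostep; eauto.
    + destruct (step_props A _ _ Hs' Hv') as [Hvs' [Hpss' Hls']].
      destruct (lc A _ _ Hs'' s' Hv' Hs') as [t1 [t2 [Ht1 [Ht2 Het]]]].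
      destruct (star_props A _ _ Ht1 Hvs'') as [Hvt1 [_ Hlt1]].
      destruct (star_props A _ _ Ht2 Hvs') as [Hvt2 [_ Hlt2]].
      destruct (nf_exists' t1 Hvt1) as [m1 [Hm1 Hm1r]].
      destruct (nf_exists' t2 Hvt2) as [m2 [Hm2 Hm2r]].
      destruct (star_props A _ _ Hsm Hvs) as [Hvm _].
      destruct (star_props A _ _ Hm1 Hvt1) as [Hvm1 _].
      destruct (star_props A _ _ Hm2 Hvt2) as [Hvm2 _].
      assert (E1 : eqv m m1).
      { apply (IH s s'' m m1); auto; try lia. apply (star_trans A _ t1); auto. }
      assert (E2 : eqv m1 m2).
      { apply (IH t1 t2 m1 m2); auto; try lia. }
      assert (E3 : eqv m2 m').
      { apply (IH s' s' m2 m'); auto; try lia. apply eqv_refl; auto.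
        apply (star_trans A _ t2); auto. }
      apply (eqv_trans A _ m1); auto. apply (eqv_trans A _ m2); auto.
Qed.

Lemma aeq_valid x y : aequiv A x y -> (avalid A x -> avalid A y) /\ (avalid A y -> avalid A x).
Proof.
  induction 1 as [x y [H1 [H2 _]] | x | x y _ [IH1 IH2] | x y z _ [IH1 IH2] _ [IH3 IH4]];
    split; auto.
Qed.

Lemma main_nf x y : aequiv A x y -> avalid A x -> forall m m', star x m -> areduced A m ->
  star y m' -> areduced A m' -> eqv m m'.
Proof.
  induction 1 as [x y [H1 [H2 H3]] | x | x y Hxy IH | x y z Hxy IH1 Hyz IH2];
    intros Hv m m' Hm Hmr Hm' Hmr'.
  - apply (newman (S (plen x)) x x m m'); auto. apply eqv_refl; auto.
    eapply star_step; eauto. split; auto.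
  - apply (newman (S (plen x)) x x m m'); auto. apply eqv_refl; auto.
  - assert (Hvx : avalid A x) by (destruct (aeq_valid x y Hxy) as [_ Hb]; auto).
    apply eqv_sym. apply (star_props A _ _ Hm' Hvx).
    apply IH; auto.
  - assert (Hvy : avalid A y) by (destruct (aeq_valid x y Hxy) as [Hb _]; auto).
    destruct (nf_exists' y Hvy) as [my [Hmy Hmyr]].
    apply (eqv_trans A _ my). apply (star_props A _ _ Hm Hv).
    apply IH1; auto. apply IH2; auto.
Qed.

Lemma reduced_equiv p p' : aequiv A p p' -> avalid A p -> areduced A p -> areduced A p' ->
  eqv p p'.
Proof.
  intros H Hv Hr Hr'. apply (main_nf p p' H Hv); auto; apply rt1n_refl.
Qed.

End NF.

End P7.
Import P7.

Module P8.

Section Shift.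
Variable A : graph_of_groups.
Local Notation ps p := (pstart (@so (gG A)) p).

Lemma aeq_step x y : avalid A x -> aelem A x y -> aequiv A x y.
Proof.
  intros Hv H. apply rst_step. split; auto. split; auto.
  apply (step_props A _ _ H Hv).
Qed.

Lemma aeq_ps x y : aequiv A x y ->
  (avalid A x -> ps y = ps x) /\ (avalid A y -> ps x = ps y).
Proof.
  induction 1 as [x y [H1 [H2 H3]] | x | x y _ [IH1 IH2] | x y z Hxy [IH1 IH2] Hyz [IH3 IH4]].
  - destruct (step_props A _ _ H3 H1) as [_ [Hp _]]. split; auto.
  - split; auto.
  - split; auto.
  - split; intros Hv.
    + rewrite IH3, IH1; auto. apply (aeq_valid A x y); auto.
    + rewrite IH2, IH4; auto. apply (aeq_valid A y z); auto.
Qed.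

Lemma aeq_cong a e r r' : aequiv A r r' -> gin (Av (so e)) a -> avalid A r -> ps r = st e ->
  aequiv A (PCons a e r) (PCons a e r').
Proof.
  intros H Ha. induction H as [x y [H1 [H2 H3]] | x | x y Hxy IH | x y z Hxy IH1 Hyz IH2];
    intros Hv Hps.
  - apply aeq_step. unfold avalid; simpl; auto. apply AE_cons; auto.
  - apply rst_refl.
  - apply rst_sym. assert (Hvx : avalid A x) by (apply (aeq_valid A x y Hxy); auto).
    apply IH; auto. rewrite <- Hps. apply (aeq_ps x y Hxy); auto.
  - assert (Hvy : avalid A y) by (apply (aeq_valid A x y Hxy); auto).
    apply rst_trans with (PCons a e y). apply IH1; auto.
    apply IH2; auto. rewrite <- Hps. apply (aeq_ps x y Hxy); auto.
Qed.

Lemma aeq_shift X e R c : avalid A (PCons X e R) -> gin (Ae e) c ->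
  aequiv A (PCons X e R)
    (PCons (gmul (Av (so e)) X (alpha e c)) e
       (phead_map (gmul (Av (st e)) (ginv (Av (st e)) (omega e c))) R)).
Proof.
  intros Hv Hc. pose proof Hv as Hv0. unfold avalid in Hv; simpl in Hv.
  destruct Hv as [HX [HR Hv]].
  pose proof (avalid_head A R Hv) as Hh. rewrite HR in Hh.
  set (d := gone (Ae (sinv e))).
  set (R' := phead_map (gmul (Av (st e)) (ginv (Av (st e)) (omega e c))) R).
  set (P := PCons X e (PCons (omega e c) (sinv e)
              (PCons (omega (sinv e) d) (sinv (sinv e)) R'))).
  assert (HvP : avalid A P).
  { unfold P, avalid; simpl. split; auto. split; auto. split; [gin_auto|].
    split; auto. split.
    - unfold d. rewrite omega_sinv. rewrite (sinvK _ e), Ae_inv. gin_auto.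
    - split.
      + unfold R'. rewrite pstart_phead_map, HR. unfold st at 2. rewrite (sinvK _ e). reflexivity.
      + unfold R'. apply avalid_phead_map; auto. rewrite HR. gin_auto. }
  apply rst_trans with P.
  - apply rst_sym. apply aeq_step; auto.
    replace (PCons X e R) with
      (PCons X e (phead_map (fun ab => gmul (Av (so (sinv e))) (omega e c)
                    (gmul (Av (so (sinv e))) (alpha (sinv e) d) ab)) R')).
    + unfold P. apply AE_cons. apply AE_base. unfold d; gin_auto.
    + f_equal. unfold R'. rewrite phead_map_comp. destruct R; simpl; f_equal;
        unfold d; rewrite alpha_one; simpl in Hh; gsimp; reflexivity.
  - apply aeq_step; auto.
    replace (PCons (gmul (Av (so e)) X (alpha e c)) e R') with
      (phead_map (fun ab => gmul (Av (so e)) X (gmul (Av (so e)) (alpha e c) ab))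
        (PCons (omega (sinv e) d) (sinv (sinv e)) R')).
    + unfold P. apply AE_base; auto.
    + simpl. rewrite (sinvK _ e). f_equal. unfold d. rewrite omega_sinv, Ae_inv, alpha_one.
      gsimp. reflexivity.
Qed.

End Shift.

End P8.
Import P8.

Module P9.

Section BG.
Variables (A : graph_of_groups) (B : agraph A).
Local Notation ps p := (pstart (@so (gG A)) p).
Local Notation qs q := (pstart (@so (bG A B)) q).

Lemma Bv_in u b : Bv B u b -> gin (Av (vmap B u)) b.
Proof. apply (proj1 (Bv_sub A B u)). Qed.
Lemma fa_in' f : gin (Av (vmap B (so f))) (fa B f).
Proof. apply fa_in. Qed.
Lemma fw_in' f : gin (Av (vmap B (st f))) (fw B f).
Proof. apply fw_in. Qed.
Lemma fw_in'' f : gin (Av (vmap B (so (sinv f)))) (fw B f).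
Proof. apply fw_in. Qed.
Lemma st_emap f : st (emap B f) = vmap B (st f).
Proof. unfold st. rewrite <- emap_inv. apply emap_o. Qed.

Hint Resolve Bv_in fa_in' fw_in' fw_in'' : grp.

Lemma mu_valid (q : bpath B) : forall pre, bvalid B q ->
  (forall u, pre = Some u -> gin (Av (vmap B (qs q))) u) ->
  avalid A (mu_from A B pre q) /\ ps (mu_from A B pre q) = vmap B (qs q).
Proof.
  unfold bvalid, avalid; induction q as [ub b | b f q' IH]; intros pre Hq Hpre; simpl in *.
  - split; auto. destruct pre as [u|]; simpl; [|gin_auto].
    specialize (Hpre u eq_refl). gin_auto.
  - destruct Hq as [Hb [Hq' Hq]].
    destruct (IH (Some (fw B f)) Hq) as [H1 H2].
    { intros u Hu; injection Hu; intros; subst. rewrite Hq'. gin_auto. }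
    split; [|apply emap_o]. split; [|split; auto].
    + rewrite emap_o. destruct pre as [u|]; simpl; [|gin_auto].
      specialize (Hpre u eq_refl). gin_auto.
    + rewrite H2, Hq'. symmetry; apply st_emap.
Qed.

Lemma mu_reduced (q : bpath B) : folded B -> forall pre, bvalid B q -> breduced B q ->
  areduced A (mu_from A B pre q).
Proof.
  intros [F1 F2].
  unfold bvalid; induction q as [ub b | b f q' IH]; intros pre Hq Hred; simpl in *; auto.
  destruct Hq as [Hb [Hq' Hq]]. destruct Hred as [Hred Hm]. split; [apply IH; auto|].
  destruct q' as [u b' | b' f' q'']; simpl; auto.
  intros [He [c [Hc Hw]]].
  simpl in Hq'. simpl in Hq. destruct Hq as [Hb' _].
  rewrite Hq' in Hw, Hb'.
  pose proof (fa_in' f') as Hfa'. rewrite Hq' in Hfa'.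
  assert (Heq : sinv f = f').
  { apply NNPP. intros Hne. apply F1.
    exists (sinv f), f', (ginv (Av (vmap B (st f))) b'), c.
    split; auto. split; [auto|]. split; [rewrite emap_inv; auto|].
    split; [rewrite emap_inv, Ae_inv; auto|]. split.
    - apply (Bv_sub A B (st f)); auto.
    - rewrite fa_inv. rewrite emap_inv. change (alpha (sinv (emap B f)) c) with (omega (emap B f) c).
      rewrite <- Hw. unfold st in *. gsimp. reflexivity. }
  subst f'. apply Hm. split; auto. exists c.
  assert (Hpo : preim_omega A B f c).
  { split; auto. exists b'. split; auto. rewrite <- Hw. rewrite fa_inv. unfold st in *. gsimp. reflexivity. }
  assert (Hpa : preim_alpha A B f c).
  { apply NNPP. intros Hn. apply F2. exists f. intros Hall.
    apply Hn. apply (Hall c). auto. }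
  split; [split; auto|].
  unfold omegaB. rewrite <- Hw. rewrite fa_inv. unfold st in *. gsimp. reflexivity.
Qed.

End BG.

End P9.
Import P9.

Module P10.

Section BG2.
Variables (A : graph_of_groups) (B : agraph A).
Local Notation ps p := (pstart (@so (gG A)) p).
Local Notation qs q := (pstart (@so (bG A B)) q).
Hint Resolve Bv_in fa_in' fw_in' fw_in'' : grp.
Lemma alpha_emap_in f c : gin (Ae (emap B f)) c -> gin (Av (vmap B (so f))) (alpha (emap B f) c).
Proof. rewrite <- emap_o. apply alpha_in. Qed.
Hint Resolve alpha_emap_in : grp.

Lemma mu_mrel_some (q : bpath B) : forall r x u z, bvalid B q ->
  gin (Av (vmap B (qs q))) x -> gin (Av (vmap B (qs q))) u ->
  cr A x (mu_from A B (Some u) q) r -> z = gmul (Av (vmap B (qs q))) x u ->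
  mrel B (Some z) r q.
Proof.
  unfold bvalid; induction q as [ub b | b f q' IH]; intros r x u z Hq Hx Hu Hc Hz;
    destruct r as [v' a' | a' e' r']; simpl in *; try contradiction.
  - destruct Hc as [<- ->]. split; auto. subst z. gsimp. reflexivity.
  - destruct Hc as [<- [c [Hc [-> Hcr]]]]. destruct Hq as [Hb [Hq' Hq]].
    split; auto. exists c. split; auto. split.
    + subst z. rewrite emap_o. gsimp. reflexivity.
    + apply (IH r' (ginv (Av (st (emap B f))) (omega (emap B f) c)) (fw B f)); auto.
      * rewrite Hq', <- st_emap. gin_auto.
      * rewrite Hq'. gin_auto.
      * rewrite Hq', <- st_emap. reflexivity.
Qed.

Lemma mu_mrel_none (q : bpath B) r : bvalid B q -> eqv A (mu_from A B None q) r ->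
  mrel B None r q.
Proof.
  unfold bvalid, eqv; destruct q as [ub b | b f q']; intros Hq Hc;
    destruct r as [v' a' | a' e' r']; simpl in *; try contradiction.
  - destruct Hc as [<- ->]. split; auto. gsimp. reflexivity.
  - destruct Hc as [<- [c [Hc [-> Hcr]]]]. destruct Hq as [Hb [Hq' Hq]].
    split; auto. exists c. split; auto. split.
    + rewrite emap_o. gsimp. reflexivity.
    + apply (mu_mrel_some q' r' (ginv (Av (st (emap B f))) (omega (emap B f) c)) (fw B f)); auto.
      * rewrite Hq', <- st_emap. gin_auto.
      * rewrite Hq'. gin_auto.
      * rewrite Hq', <- st_emap. reflexivity.
Qed.

Lemma mrel_aequiv_some (q : bpath B) : forall p y u z, bvalid B q ->
  gin (Av (vmap B (qs q))) y -> gin (Av (vmap B (qs q))) u -> avalid A p ->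
  mrel B (Some z) p q -> z = gmul (Av (vmap B (qs q))) y u ->
  aequiv A p (phead_map (gmul (Av (vmap B (qs q))) y) (mu_from A B (Some u) q)).
Proof.
  unfold bvalid; induction q as [ub b | b f q' IH]; intros p y u z Hq Hy Hu Hp Hm Hz;
    destruct p as [v a | a e r]; simpl in *; try contradiction.
  - destruct Hm as [<- ->]. subst z. simpl.
    assert (E : gmul (Av (vmap B ub)) (gmul (Av (vmap B ub)) y u) b =
                gmul (Av (vmap B ub)) y (gmul (Av (vmap B ub)) u b)) by (gsimp; reflexivity).
    rewrite E. apply rst_refl.
  - destruct Hm as [<- [c [Hc [Ha Hm]]]]. destruct Hq as [Hb [Hq' Hq]].
    destruct (mu_valid A B q' (Some (fw B f)) Hq) as [HvM HpsM].
    { intros u0 Hu0; injection Hu0; intros; subst. rewrite Hq'. gin_auto. }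
    rewrite Hq', <- st_emap in HpsM.
    pose proof Hp as Hp0. unfold avalid in Hp; simpl in Hp. destruct Hp as [Hain [Hr Hvr]].
    set (M := mu_from A B (Some (fw B f)) q') in *.
    assert (IH' : aequiv A r (phead_map (gmul (Av (st (emap B f)))
                 (ginv (Av (st (emap B f))) (omega (emap B f) c))) M)).
    { rewrite (st_emap A B f), <- Hq' in Hm |- *.
      eapply (IH r _ (fw B f) _ Hq); eauto.
      - rewrite Hq', <- st_emap. gin_auto.
      - rewrite Hq'. gin_auto. }
    apply rst_trans with (PCons a (emap B f) (phead_map (gmul (Av (st (emap B f)))
                 (ginv (Av (st (emap B f))) (omega (emap B f) c))) M)).
    + apply aeq_cong; auto.
    + apply rst_sym.
      replace a with (gmul (Av (so (emap B f)))
          (gmul (Av (vmap B (so f))) y (gmul (Av (vmap B (so f))) (gmul (Av (vmap B (so f))) u b) (fa B f)))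
          (alpha (emap B f) c)).
      * apply aeq_shift; auto. unfold avalid; simpl. rewrite emap_o. split; [gin_auto|]. split; auto.
      * rewrite Ha. subst z. simpl. rewrite emap_o. gsimp. reflexivity.
Qed.

Lemma mrel_aequiv_none (q : bpath B) p : bvalid B q -> avalid A p -> mrel B None p q ->
  aequiv A p (mu_from A B None q).
Proof.
  unfold bvalid; destruct q as [ub b | b f q']; intros Hq Hp Hm;
    destruct p as [v a | a e r]; simpl in *; try contradiction.
  - destruct Hm as [<- ->]. apply rst_refl.
  - destruct Hm as [<- [c [Hc [Ha Hm]]]]. destruct Hq as [Hb [Hq' Hq]].
    destruct (mu_valid A B q' (Some (fw B f)) Hq) as [HvM HpsM].
    { intros u0 Hu0; injection Hu0; intros; subst. rewrite Hq'. gin_auto. }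
    rewrite Hq', <- st_emap in HpsM.
    pose proof Hp as Hp0. unfold avalid in Hp; simpl in Hp. destruct Hp as [Hain [Hr Hvr]].
    set (M := mu_from A B (Some (fw B f)) q') in *.
    assert (IH' : aequiv A r (phead_map (gmul (Av (st (emap B f)))
                 (ginv (Av (st (emap B f))) (omega (emap B f) c))) M)).
    { rewrite (st_emap A B f), <- Hq' in Hm |- *.
      eapply (mrel_aequiv_some q' r _ (fw B f) _ Hq); eauto.
      - rewrite Hq', <- st_emap. gin_auto.
      - rewrite Hq'. gin_auto. }
    apply rst_trans with (PCons a (emap B f) (phead_map (gmul (Av (st (emap B f)))
                 (ginv (Av (st (emap B f))) (omega (emap B f) c))) M)).
    + apply aeq_cong; auto.
    + apply rst_sym.
      replace a with (gmul (Av (so (emap B f)))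
          (gmul (Av (vmap B (so f))) b (fa B f))
          (alpha (emap B f) c)).
      * apply aeq_shift; auto. unfold avalid; simpl. rewrite emap_o. split; [gin_auto|]. split; auto.
      * rewrite Ha. simpl. rewrite emap_o. reflexivity.
Qed.

End BG2.


End P10.
Import P10.

Theorem mainTheorem10 (A : graph_of_groups) (B : agraph A) (p : apath A) :
  folded B -> avalid A p -> areduced A p ->
  ((exists q : bpath B, bvalid B q /\ breduced B q /\ aequiv A p (mu B q)) <->
   (exists q : bpath B, bvalid B q /\ breduced B q /\ mrel B None p q)).
Proof.
  intros Hf Hv Hr. split; intros [q [Hq [Hqr H]]]; exists q; split; auto; split; auto.
  - destruct (mu_valid A B q None Hq) as [HvM _]. { intros u Hu; discriminate. }
    pose proof (mu_reduced A B q Hf None Hq Hqr) as HrM.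
    pose proof (reduced_equiv A p (mu B q) H Hv Hr HrM) as He.
    apply mu_mrel_none; auto. apply eqv_sym; auto.
  - apply mrel_aequiv_none; auto.
Qed.
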